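(* Let $\lambda\in\mathbb N$ and $N=n+m$ with $n,m\in\mathbb N$. Then $$S_N(\lambda)=(-1)^{\lambda\frac{N(N-1)}{2}}\sum_{\substack{I_{kl}=-\lambda\\ 1\le k<l\le N}}^{\lambda}(-1)^{\sum_{k<l}I_{kl}}\prod_{1\le k<l\le N}\binom{2\lambda}{\lambda+I_{kl}}\prod_{k=1}^N\frac{1}{1+(N-1)\lambda+\sum_{l\ne k}I_{kl}},$$ $$S_{n,m}(\lambda)=(-1)^{\lambda(n(n-1)+m(m-1))/2}\sum_{\substack{I_{kl}=-\lambda\\ 1\le k<l\le N}}^{\lambda}(-1)^{\sum_{k<l}s_{kl}I_{kl}}\prod_{1\le k<l\le N}\binom{2\lambda}{\lambda+I_{kl}}\prod_{k=1}^N\frac{1}{1+(N-1)\lambda+\sum_{l\ne k}I_{kl}}.$$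
   Context: Define $$S_N(\lambda)=\int_{[0,1]^N}\prod_{1\le k<l\le N}|y_k-y_l|^{2\lambda}\,dy,$$ $$S_{n,m}(\lambda)=\int_{[0,1]^N}\prod_{1\le k<l\le n}|y_k-y_l|^{2\lambda}\prod_{\substack{k=1,\dots,n\\ l=n+1,\dots,N}}|y_k+y_l|^{2\lambda}\prod_{n+1\le k<l\le N}|y_k-y_l|^{2\lambda}\,dy.$$ The sums run over all families of integers $I_{kl}\in\{-\lambda,\dots,\lambda\}$, one for each pair $1\le k<l\le N$, and $I_{kl}:=-I_{lk}$ for $k>l$. For $k<l$, $s_{kl}=1$ if the factor for the pair $(k,l)$ in the integrand of $S_{n,m}$ is $|y_k-y_l|^{2\lambda}$ (i.e. $k,l$ both in $\{1,\dots,n\}$ or both in $\{n+1,\dots,N\}$), and $s_{kl}=0$ if it is $|y_k+y_l|^{2\lambda}$. *)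

(* Defs.v *)
From HB Require Import structures.
From mathcomp Require Import all_boot all_order all_algebra.
From mathcomp Require Import all_classical all_reals all_analysis.
Set Implicit Arguments. Unset Strict Implicit. Unset Printing Implicit Defensive.
Import Order.TTheory GRing.Theory Num.Theory.
Local Open Scope ring_scope.
Local Open Scope ereal_scope.

Definition vcons (R : Type) (N : nat) (x : R) (y : 'I_N -> R) : 'I_N.+1 -> R :=
  fun i => match unlift ord0 i with None => x | Some j => y j end.

Fixpoint cube_int (R : realType) (N : nat) : (('I_N -> R) -> \bar R) -> \bar R :=
  match N with
  | 0 => fun F => F (fun _ => 0%R)
  | N'.+1 => fun F =>
      \int[@lebesgue_measure R]_(x in `[0%R, 1%R]) cube_int (fun y => F (vcons x y))
  end.

Local Close Scope ereal_scope.

Definition S_N (R : realType) (lam N : nat) : \bar R :=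
  cube_int (fun y : 'I_N -> R =>
    (\prod_(k < N) \prod_(l < N | (k < l)%N) `|y k - y l| ^+ (2 * lam))%:E).

(* same side of the split {1..n} | {n+1..n+m} : s_kl = 1 *)
Definition same_side (n m : nat) (k l : 'I_(n + m)) : bool := (k < n)%N == (l < n)%N.

Definition S_nm (R : realType) (lam n m : nat) : \bar R :=
  cube_int (fun y : 'I_(n + m) -> R =>
    (\prod_(k < n + m) \prod_(l < n + m | (k < l)%N)
       (if same_side k l then `|y k - y l| else `|y k + y l|) ^+ (2 * lam))%:E).

Notation pairs N := {p : 'I_N * 'I_N | (p.1 < p.2)%N}.

(* A family (I_kl)_{k<l} with I_kl in {-lam..lam} is encoded by
   J : {ffun pairs N -> 'I_(2 lam + 1)} with I_kl = J(k,l) - lam;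
   Ival extends it with I_lk = - I_kl (and 0 on the diagonal, never used). *)
Definition Ival (lam N : nat) (J : {ffun pairs N -> 'I_(2 * lam).+1}) (k l : 'I_N) : int :=
  match @insub _ _ (pairs N) (k, l) with
  | Some p => (J p : nat)%:Z - lam%:Z
  | None => match @insub _ _ (pairs N) (l, k) with
            | Some p => lam%:Z - (J p : nat)%:Z
            | None => 0
            end
  end.

Definition Isum (R : realType) (lam N : nat) (s : 'I_N -> 'I_N -> bool) : R :=
  \sum_(J : {ffun pairs N -> 'I_(2 * lam).+1})
    (-1) ^ (\sum_(k < N) \sum_(l < N | (k < l)%N) (s k l)%:Z * Ival J k l)
    * (\prod_(k < N) \prod_(l < N | (k < l)%N) ('C(2 * lam, absz (lam%:Z + Ival J k l)%R))%:R)
    * \prod_(k < N)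
        (((1 + (N - 1) * lam)%N%:Z + \sum_(l < N | l != k) Ival J k l)%:~R)^-1.

(* Main.v *)
Require Import Defs.
From HB Require Import structures.
From mathcomp Require Import all_boot all_order all_algebra.
From mathcomp Require Import all_classical all_reals all_analysis.
From mathcomp Require Import ring lra zify.
Import numFieldNormedType.Exports.
Import Order.TTheory GRing.Theory Num.Theory.
Local Open Scope ring_scope.

Lemma int01_poly (R : realType) (T : finType) (d : T -> R) (a : T -> nat) :
  (\int[@lebesgue_measure R]_(x in `[0%R, 1%R]) (\sum_t d t * x ^+ a t)%:E)%E
  = (\sum_t d t / (a t).+1%:R)%:E.
Proof.
pose P : {poly R} := \sum_t (d t / (a t).+1%:R) *: 'X^((a t).+1).
have hP : forall x, (P^`()).[x] = \sum_t d t * x ^+ a t.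
  move=> x; rewrite /P raddf_sum horner_sum; apply: eq_bigr => t _.
  rewrite /= derivZ derivXn /= hornerZ hornerMn hornerXn -mulr_natr.
  rewrite mul1r -mulr_natr; field; by rewrite addrC natr1 pnatr_eq0.
have -> : (fun x => (\sum_t d t * x ^+ a t)%:E) = (fun x => ((P^`()).[x])%:E).
  by apply/funext => x; rewrite hP.
rewrite (@continuous_FTC2 R (horner P^`()) (horner P)) //.
- rewrite -EFinD; congr (_%:E).
  rewrite /P !horner_sum -sumrB; apply: eq_bigr => t _.
  by rewrite !hornerZ !hornerXn expr1n expr0n /= mulr0 subr0 mulr1.
- by apply: continuous_subspaceT; exact: continuous_horner.
- split.
  + by move=> x _; exact: derivable_horner.
  + by apply: cvg_at_right_filter; exact: continuous_horner.
  + by apply: cvg_at_left_filter; exact: continuous_horner.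
- by move=> x _; rewrite derivE.
Qed.

Lemma vcons0 (R : Type) N (x : R) (y : 'I_N -> R) : vcons x y ord0 = x.
Proof. by rewrite /vcons unlift_none. Qed.
Lemma vconsS (R : Type) N (x : R) (y : 'I_N -> R) i : vcons x y (lift ord0 i) = y i.
Proof. by rewrite /vcons liftK. Qed.

Lemma cube_poly (R : realType) N (T : finType) (c : T -> R) (e : T -> 'I_N -> nat) :
  cube_int (fun y : 'I_N -> R => (\sum_t c t * \prod_k y k ^+ e t k)%:E)
  = (\sum_t c t * \prod_k ((e t k).+1%:R)^-1)%:E.
Proof.
elim: N c e => [|N IH] c e /=.
  by congr EFin; apply: eq_bigr => t _; rewrite !big_ord0.
have -> : (fun x => cube_int (fun y => (\sum_t c t * \prod_k vcons x y k ^+ e t k)%:E)) =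
  fun x => (\sum_t (c t * \prod_(k < N) ((e t (lift ord0 k)).+1%:R)^-1) * x ^+ e t ord0)%:E.
  apply/funext => x.
  have h := IH (fun t => c t * x ^+ e t ord0) (fun t k => e t (lift ord0 k)).
  simpl in h.
  transitivity (cube_int (fun y : 'I_N -> R =>
     (\sum_t (c t * x ^+ e t ord0) * \prod_k y k ^+ e t (lift ord0 k))%:E)).
    congr cube_int; apply/funext => y; congr EFin; apply: eq_bigr => t _.
    rewrite big_ord_recl vcons0 mulrA; congr (_ * _); apply: eq_bigr => i _.
    by rewrite vconsS.
  by rewrite h; congr EFin; apply: eq_bigr => t _; rewrite mulrAC.
rewrite int01_poly; congr EFin; apply: eq_bigr => t _.
by rewrite big_ord_recl mulrAC mulrA.
Qed.

Section IvalS.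
Variables (lam N : nat) (J : {ffun pairs N -> 'I_(2 * lam).+1}).

Lemma Ival_val (p : pairs N) : Ival J (val p).1 (val p).2 = (J p : nat)%:Z - lam%:Z.
Proof.
rewrite /Ival -surjective_pairing; case: insubP => [u _ hu|].
  by rewrite (val_inj hu).
by rewrite (valP p).
Qed.

Lemma Ival_anti (k l : 'I_N) : Ival J l k = - Ival J k l.
Proof.
rewrite /Ival.
case: (insubP (pairs N) (l, k)) => [u hlk eu | hlk];
case: (insubP (pairs N) (k, l)) => [v hkl ev | hkl] //=.
- by move: hlk hkl => /= h1 h2; have := ltn_trans h1 h2; rewrite ltnn.
- by rewrite opprB.
- by rewrite opprB.
Qed.

Lemma Ival_ge (k l : 'I_N) : 0 <= lam%:Z + Ival J k l.
Proof.
rewrite /Ival.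
case: (insubP (pairs N) (k, l)) => [u _ _ | _].
  by rewrite addrC subrK.
case: (insubP (pairs N) (l, k)) => [u _ _ | _]; last by rewrite addr0.
have := ltn_ord (J u); rewrite ltnS => h.
rewrite addrA -PoszD subr_ge0 lez_nat; lia.
Qed.

End IvalS.

Lemma prod_pairs (R : comRingType) N (F : 'I_N -> 'I_N -> R) :
  \prod_(p : pairs N) F (val p).1 (val p).2 = \prod_(k < N) \prod_(l < N | (k < l)%N) F k l.
Proof.
rewrite pair_big_dep /=.
rewrite (big_sub (fun p : 'I_N * 'I_N => (p.1 < p.2)%N) (fun p => F p.1 p.2)).
by [].
Qed.

Lemma regroup (R : comRingType) N (G : 'I_N -> 'I_N -> R) :
  \prod_(k < N) \prod_(l < N | (k < l)%N) (G k l * G l k)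
  = \prod_(k < N) \prod_(l < N | l != k) G k l.
Proof.
under eq_bigr => k _ do rewrite big_split; rewrite big_split /=.
have -> : \prod_(k < N) \prod_(l < N | (k < l)%N) G l k
        = \prod_(k < N) \prod_(l < N | (l < k)%N) G k l.
  rewrite (eq_bigr (fun k : 'I_N => \prod_(l < N) (if (k < l)%N then G l k else 1))); last first.
    by move=> k _; rewrite big_mkcond.
  rewrite exchange_big /=; apply: eq_bigr => k _.
  by rewrite [RHS]big_mkcond.
rewrite -big_split /=; apply: eq_bigr => k _.
rewrite [RHS](bigID (fun l : 'I_N => (k < l)%N)) /=; congr (_ * _).
  by apply: eq_bigl => l; rewrite -(inj_eq val_inj) /=; lia.
by apply: eq_bigl => l; rewrite -(inj_eq val_inj) /=; lia.
Qed.

Lemma normX2 (R : realDomainType) (x : R) lam : `|x| ^+ (2 * lam) = x ^+ (2 * lam).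
Proof. by rewrite !exprM real_normK ?num_real. Qed.

Lemma bin (R : realDomainType) (b : bool) (u v : R) lam :
  (if b then `|u - v| else `|u + v|) ^+ (2 * lam)
  = \sum_(j < (2 * lam).+1) ('C(2 * lam, j)%:R * (if b then (-1) ^+ (2 * lam - j) else 1)
       * (u ^+ j * v ^+ (2 * lam - j))).
Proof.
case: b; rewrite normX2 addrC exprDn; apply: eq_bigr => j _.
  by rewrite [(- v) ^+ _]exprNn -mulr_natl; ring.
by rewrite -mulr_natl; ring.
Qed.

Lemma signI (R : fieldType) lam (J : nat) (b : bool) : (J <= 2 * lam)%N ->
  (if b then (-1) ^+ (2 * lam - J) else 1 : R)
  = (-1) ^+ (lam * b) * (-1) ^ ((b : nat)%:Z * ((J : nat)%:Z - lam%:Z)).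
Proof.
move=> hJ; case: b => /=; last by rewrite muln0 mul0r expr0z mulr1.
rewrite muln1 mul1r.
have h1 : (-1 : R) != 0 by rewrite oppr_eq0 oner_eq0.
rewrite expfzDr // -exprnN /= mulrCA mulfV ?signr_eq0 // mulr1.
by rewrite -signr_odd oddN ?signr_odd // oddM.
Qed.

Lemma regroup2 (R : comRingType) N (G : 'I_N -> 'I_N -> R) :
  \prod_(k < N) \prod_(l < N | (k < l)%N) G k l * \prod_(k < N) \prod_(l < N | (k < l)%N) G l k
  = \prod_(k < N) \prod_(l < N | l != k) G k l.
Proof.
rewrite -regroup; under [RHS]eq_bigr => k _ do rewrite big_split /=.
by rewrite big_split.
Qed.

Section Counting.
Local Open Scope nat_scope.

Lemma cnt_rec N (f : nat -> nat -> nat) :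
  \sum_(k < N.+1) \sum_(l < N.+1 | (k < l)%N) f k l
  = \sum_(k < N) \sum_(l < N | (k < l)%N) f k l + \sum_(k < N) f k N.
Proof.
rewrite big_ord_recr /= [X in _ + X]big1 ?addn0; last first.
  by move=> l; rewrite ltnNge -ltnS ltn_ord.
rewrite -big_split /=; apply: eq_bigr => k _.
by rewrite big_mkcond big_ord_recr /= ltn_ord -big_mkcond.
Qed.

Lemma cnt_all N : \sum_(k < N) \sum_(l < N | (k < l)%N) (true : nat) = (N * (N - 1) %/ 2)%N.
Proof.
have -> : (N * (N - 1) %/ 2 = 'C(N, 2))%N by rewrite bin2 subn1 divn2.
elim: N => [|N IH]; first by rewrite big_ord0.
by rewrite (cnt_rec N (fun _ _ => true : nat)) IH sum1_card card_ord binS bin1.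
Qed.

Lemma bin2_dbl n : (n * (n - 1) = 'C(n, 2) * 2)%N.
Proof.
rewrite bin2 subn1 muln2 halfK.
have -> : odd (n * n.-1) = false by case: n => //= n; rewrite oddM /=; case: (odd n).
by rewrite subn0.
Qed.

Lemma cnt_same n m :
  \sum_(k < n + m) \sum_(l < n + m | (k < l)%N) (((k < n) == (l < n))%N : nat)
  = ((n * (n - 1) + m * (m - 1)) %/ 2)%N.
Proof.
pose f := fun k l : nat => (((k < n) == (l < n))%N : nat).
have A : forall N, (N <= n)%N -> \sum_(k < N) \sum_(l < N | (k < l)%N) f k l = 'C(N, 2).
  elim=> [|N IH] hN; first by rewrite big_ord0.
  rewrite cnt_rec IH ?(ltnW hN) // binS bin1; congr (_ + _).
  rewrite -[RHS]card_ord -sum1_card; apply: eq_bigr => k _.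
  by rewrite /f hN (leq_trans (ltn_ord k) (ltnW hN)).
have C : forall m, \sum_(k < n + m) f k (n + m) = m.
  elim=> [|j IH].
    by rewrite addn0 big1 // => k _; rewrite /f ltn_ord ltnn.
  rewrite addnS big_ord_recr /=.
  have -> : \sum_(i < n + j) f i (n + j).+1 = \sum_(k < n + j) f k (n + j).
    apply: eq_bigr => k _; rewrite /f.
    have -> : ((n + j).+1 < n)%N = false by lia.
    have -> : ((n + j) < n)%N = false by lia.
    by [].
  rewrite IH /f.
  have -> : ((n + j) < n)%N = false by lia.
  have -> : ((n + j).+1 < n)%N = false by lia.
  by rewrite addn1.
have B : forall m, \sum_(k < n + m) \sum_(l < n + m | (k < l)%N) f k l = ('C(n, 2) + 'C(m, 2))%N.
  elim=> [|j IH]; first by rewrite addn0 A // bin0n /= addn0.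
  by rewrite addnS cnt_rec IH C binS bin1 addnA.
rewrite (B m) !bin2_dbl.
set a := 'C(n, 2); set b := 'C(m, 2).
by rewrite -mulnDl mulnK.
Qed.

End Counting.

Lemma Ival_sval lam N (J : {ffun pairs N -> 'I_(2 * lam).+1}) (p : pairs N) :
  Ival J (sval p).1 (sval p).2 = (J p : nat)%:Z - lam%:Z.
Proof. exact: Ival_val. Qed.

Lemma expand_J (R : realType) lam N (s : 'I_N -> 'I_N -> bool) (J : {ffun pairs N -> 'I_(2 * lam).+1}) (y : 'I_N -> R) :
  \prod_(p : pairs N) ('C(2 * lam, J p)%:R * (if s (val p).1 (val p).2 then (-1) ^+ (2 * lam - J p) else 1)
       * (y (val p).1 ^+ J p * y (val p).2 ^+ (2 * lam - J p)))
  = (-1) ^+ (lam * \sum_(k < N) \sum_(l < N | (k < l)%N) (s k l : nat)) *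
    ((-1) ^ (\sum_(k < N) \sum_(l < N | (k < l)%N) (s k l)%:Z * Ival J k l) *
     \prod_(k < N) \prod_(l < N | (k < l)%N) ('C(2 * lam, absz (lam%:Z + Ival J k l)%R))%:R)
    * \prod_(k < N) y k ^+ (\sum_(l < N | l != k) absz (lam%:Z + Ival J k l)%R).
Proof.
pose T2 := (fun k l => ('C(2 * lam, absz (lam%:Z + Ival J k l)%R))%:R *
     ((-1) ^+ (lam * s k l) * (-1) ^ ((s k l : nat)%:Z * Ival J k l)) *
     (y k ^+ absz (lam%:Z + Ival J k l)%R * y l ^+ absz (lam%:Z + Ival J l k)%R)).
transitivity (\prod_(p : pairs N) T2 (val p).1 (val p).2).
  apply: eq_bigr => p _; rewrite /T2 /=.
  have hJ : (J p <= 2 * lam)%N by rewrite -ltnS ltn_ord.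
  rewrite [Ival J (sval p).2 _]Ival_anti Ival_sval -signI //.
  have -> : absz (lam%:Z + ((J p : nat)%:Z - lam%:Z))%R = J p by rewrite addrC subrK.
  have -> : absz (lam%:Z - ((J p : nat)%:Z - lam%:Z))%R = (2 * lam - J p)%N.
    by rewrite opprB addrA -PoszD subzn // addnn -mul2n.
  by [].
rewrite (@prod_pairs _ _ T2) /T2.
under eq_bigr => k _ do rewrite !big_split /=.
rewrite !big_split /=.
have h1 : (-1 : R) != 0 by rewrite oppr_eq0 oner_eq0.
have E1 : \prod_(i < N) \prod_(j < N | (i < j)%N) (-1) ^+ (lam * s i j)
    = (-1) ^+ (lam * \sum_(k < N) \sum_(l < N | (k < l)%N) (s k l : nat)) :> R.
  under eq_bigr => i _ do rewrite prodrXr.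
  rewrite prodrXr; congr (_ ^+ _).
  rewrite big_distrr /=; apply: eq_bigr => i _.
  by rewrite big_distrr.
have E2 : forall z : 'I_N -> 'I_N -> int,
   \prod_(i < N) \prod_(j < N | (i < j)%N) (-1) ^ (z i j)
    = (-1) ^ (\sum_(k < N) \sum_(l < N | (k < l)%N) z k l) :> R.
  move=> z.
  rewrite [RHS](big_morph (fun z : int => (-1 : R) ^ z) (fun a b => expfzDr a b h1) (expr0z _)).
  apply: eq_bigr => i _.
  by rewrite [RHS](big_morph (fun z : int => (-1 : R) ^ z) (fun a b => expfzDr a b h1) (expr0z _)).
rewrite E1 E2.
rewrite (@regroup2 _ _ (fun k l => y k ^+ absz (lam%:Z + Ival J k l)%R)).
have E3 : \prod_(k < N) \prod_(l < N | l != k) y k ^+ absz (lam%:Z + Ival J k l)%R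
   = \prod_(k < N) y k ^+ (\sum_(l < N | l != k) absz (lam%:Z + Ival J k l)%R).
  by apply: eq_bigr => k _; rewrite prodrXr.
rewrite E3; congr (_ * _); by rewrite [LHS]mulrC -mulrA.
Qed.

Lemma main_gen (R : realType) lam N (s : 'I_N -> 'I_N -> bool) :
  cube_int (fun y : 'I_N -> R => (\prod_(k < N) \prod_(l < N | (k < l)%N)
       (if s k l then `|y k - y l| else `|y k + y l|) ^+ (2 * lam))%:E)
  = ((-1) ^+ (lam * \sum_(k < N) \sum_(l < N | (k < l)%N) (s k l : nat)) * Isum R lam s)%:E.
Proof.
set cnt := (\sum_(k < N) _)%N.
pose c (J : {ffun pairs N -> 'I_(2 * lam).+1}) : R := (-1) ^+ (lam * cnt) *
    ((-1) ^ (\sum_(k < N) \sum_(l < N | (k < l)%N) (s k l)%:Z * Ival J k l) *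
     \prod_(k < N) \prod_(l < N | (k < l)%N) ('C(2 * lam, absz (lam%:Z + Ival J k l)%R))%:R).
pose e (J : {ffun pairs N -> 'I_(2 * lam).+1}) (k : 'I_N) :=
  (\sum_(l < N | l != k) absz (lam%:Z + Ival J k l)%R)%N.
transitivity (cube_int (fun y : 'I_N -> R => (\sum_J c J * \prod_k y k ^+ e J k)%:E)).
  congr cube_int; apply/funext => y; congr EFin.
  under eq_bigr => k _ do under eq_bigr => l _ do rewrite bin.
  pose T := fun k l => \sum_(j < (2 * lam).+1) ('C(2 * lam, j)%:R *
      (if s k l then (-1) ^+ (2 * lam - j) else 1) * (y k ^+ j * y l ^+ (2 * lam - j))).
  rewrite -(@prod_pairs _ _ T) /T bigA_distr_bigA /=.
  apply: eq_bigr => J _.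
  by rewrite expand_J.
rewrite cube_poly; congr EFin.
rewrite /Isum mulr_sumr; apply: eq_bigr => J _.
rewrite /c -!mulrA; congr (_ * (_ * (_ * _))).
apply: eq_bigr => k _.
have H : ((e J k).+1 : int) = (1 + (N - 1) * lam)%N%:Z + \sum_(l < N | l != k) Ival J k l.
  rewrite /e -addn1 PoszD addrC -[X in _ = X + _]/(1%:Z + ((N - 1) * lam)%N%:Z) -addrA.
  congr (_ + _).
  rewrite (big_morph Posz PoszD erefl).
  under eq_bigr => l _ do rewrite gez0_abs ?Ival_ge //.
  rewrite big_split /= sumr_const.
  congr (_ + _).
  by rewrite cardC1 card_ord subn1 mulnC PoszM -mulr_natr natz.
rewrite -[((e J k).+1)%:R]/((((e J k).+1)%:Z)%:~R : R) H.
by [].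
Qed.

Theorem proposition3 (R : realType) (lam n m : nat) :
  S_N R lam (n + m) =
    ((-1) ^+ (lam * ((n + m) * (n + m - 1) %/ 2))
       * Isum R lam (fun _ _ : 'I_(n + m) => true))%:E
  /\
  S_nm R lam n m =
    ((-1) ^+ (lam * ((n * (n - 1) + m * (m - 1)) %/ 2))
       * Isum R lam (fun k l : 'I_(n + m) => same_side k l))%:E.
Proof.
split.
  have := main_gen R lam (n + m) (fun _ _ : 'I_(n + m) => true).
  rewrite cnt_all => <-.
  by rewrite /S_N; congr cube_int.
have := main_gen R lam (n + m) (fun k l : 'I_(n + m) => same_side k l).
unfold same_side at 1.
rewrite cnt_same => <-.
by rewrite /S_nm; congr cube_int.
Qed.
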